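(* Let $(\Omega,\mathcal G,\mathbb P)$ be a probability space, $\mathcal F=(\mathcal F_t)_{t\in[0,\infty)}$ a filtration with $\mathcal F_\infty\subset\mathcal G$, and $X$ an $\mathbb R^d$-valued Lévy process relative to $\mathcal F$. If $\mathcal G=\sigma(X)$, then $\mathcal G\otimes\mathcal B_{[0,\infty)}=\mathcal O\vee\sigma_{\Omega\times[0,\infty)}(\blacktriangle X)$. If $\mathcal G=\sigma(X)$ only up to $\mathbb P$-negligible sets, then this equality holds up to evanescent sets.
   Context: $X$ is a Lévy process relative to $\mathcal F$: $\mathcal F$-adapted, càdlàg, $X_0=0$ a.s., and $X_t-X_s$ independent of $\mathcal F_s$ with the law of $X_{t-s}$ for $s\le t$. $(\mathbb D,\mathcal D)$: càdlàg paths $[0,\infty)\to\mathbb R^d$ with the $\sigma$-field generated by coordinate projections. $\blacktriangle X:\Omega\times[0,\infty)\to\mathbb D$ is $(\omega,t)\mapsto(X_{t+s}(\omega)-X_t(\omega))_{s\ge0}$, and $\sigma_{\Omega\times[0,\infty)}(\blacktriangle X)$ is the $\sigma$-field on $\Omega\times[0,\infty)$ it generates. $\mathcal O$ is the optional $\sigma$-field relative to $\mathcal F$. A set in $\Omega\times[0,\infty)$ is evanescent if its projection on $\Omega$ is contained in a $\mathbb P$-null set. *)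

(* Defs.v *)
From HB Require Import structures.
From mathcomp Require Import all_boot all_order all_algebra.
From mathcomp Require Import all_classical all_reals all_analysis.
Set Implicit Arguments. Unset Strict Implicit. Unset Printing Implicit Defensive.
Import Order.TTheory GRing.Theory Num.Theory.
Import numFieldNormedType.Exports.
Local Open Scope classical_set_scope.
Local Open Scope ring_scope.

Section defs.
Context {R : realType}.

Definition borelV (d : nat) : set (set 'rV[R]_d) := <<s [set A | open A] >>.

Definition Tplus : set R := `[0, +oo[%classic.

Definition cadlag (V : topologicalType) (f : R -> V) : Prop :=
  (forall t, 0 <= t -> f x @[x --> t^'+] --> f t) /\
  (forall t, 0 < t -> exists l : V, f x @[x --> t^'-] --> l).

Context {dm : measure_display} {Omega : measurableType dm}.

(* filtration (F_t)_{t >= 0} of sub-sigma-fields of G (so F_oo is in G) *)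
Definition filtration (F : R -> set (set Omega)) : Prop :=
  [/\ forall t, 0 <= t -> sigma_algebra setT (F t),
      forall s t, 0 <= s -> s <= t -> F s `<=` F t &
      forall t, 0 <= t -> F t `<=` measurable].

Definition incr_st (d : nat) (X : R -> Omega -> 'rV[R]_d) (s t : R) :
  Omega -> 'rV[R]_d := fun w => X t w - X s w.

Definition levy_process (P : probability Omega R) (F : R -> set (set Omega))
    (d : nat) (X : R -> Omega -> 'rV[R]_d) : Prop :=
  [/\ (forall t, 0 <= t -> forall B, borelV B -> F t (X t @^-1` B)),
      (forall w, cadlag (fun t => X t w)),
      P.-negligible [set w | X 0 w != 0],
      (forall s t, 0 <= s -> s <= t -> forall A B, F s A -> borelV B ->
         P (A `&` (incr_st X s t @^-1` B)) =
         (P A * P (incr_st X s t @^-1` B))%E) &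
      (forall s t, 0 <= s -> s <= t -> forall B, borelV B ->
         P (incr_st X s t @^-1` B) = P (X (t - s) @^-1` B))].

Definition sigmaX (d : nat) (X : R -> Omega -> 'rV[R]_d) : set (set Omega) :=
  <<s [set X t @^-1` B | t in Tplus & B in borelV (d:=d)] >>.

Definition Dom : set (Omega * R) := [set: Omega] `*` Tplus.

Definition prodGB : set (set (Omega * R)) :=
  <<s Dom, [set A `*` B | A in measurable & B in
             [set B : set R | measurable B /\ B `<=` Tplus]] >>.

Definition adapted (F : R -> set (set Omega)) (Y : R -> Omega -> R) : Prop :=
  forall t, 0 <= t -> forall B : set R, measurable B -> F t (Y t @^-1` B).

Definition optional (F : R -> set (set Omega)) : set (set (Omega * R)) :=
  <<s Dom, [set Dom `&` ((fun p => Y p.2 p.1) @^-1` B) |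
            Y in [set Y | adapted F Y /\ forall w, cadlag (fun t => Y t w)] &
            B in [set B : set R | measurable B]] >>.

Definition Dsigma (d : nat) : set (set (R -> 'rV[R]_d)) :=
  <<s [set [set f | cadlag f] `&` ((fun f => f s) @^-1` B) |
        s in Tplus & B in borelV (d:=d)] >>.

Definition incr (d : nat) (X : R -> Omega -> 'rV[R]_d) (p : Omega * R) :
  R -> 'rV[R]_d := fun s => X (p.2 + s) p.1 - X p.2 p.1.

Definition sigma_incr (d : nat) (X : R -> Omega -> 'rV[R]_d) :
  set (set (Omega * R)) :=
  <<s Dom, [set Dom `&` (incr X @^-1` A) | A in Dsigma (d:=d)] >>.

Definition sjoin (G1 G2 : set (set (Omega * R))) : set (set (Omega * R)) :=
  <<s Dom, G1 `|` G2 >>.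

Definition symdiff (T : Type) (A B : set T) : set T := (A `\` B) `|` (B `\` A).

Definition evanescent (P : probability Omega R) (A : set (Omega * R)) : Prop :=
  P.-negligible [set w | exists t, A (w, t)].

End defs.

(* Main.v *)
Require Import Defs.
From HB Require Import structures.
From mathcomp Require Import all_boot all_order all_algebra.
From mathcomp Require Import all_classical all_reals all_analysis.
From mathcomp Require Import lra.
Import Order.TTheory GRing.Theory Num.Theory.
Import numFieldNormedType.Exports.
Local Open Scope classical_set_scope.
Local Open Scope ring_scope.
Set Implicit Arguments. Unset Strict Implicit.

Section trace.
Context {R : realType} {dm : measure_display} {Omega : measurableType dm}.

Local Notation Dom := (@Dom R dm Omega).

Definition Tr (S : set (set (Omega * R))) : set (set (Omega * R)) :=
  [set A | S (Dom `&` A)].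

Definition mt (S : set (set (Omega * R))) := g_sigma_algebraType (Tr S).

Lemma Tr_sigma S : sigma_algebra Dom S -> sigma_algebra setT (Tr S).
Proof. exact: (@sigma_algebra_image _ _ Dom idfun S). Qed.

Lemma mtP S (A : set (Omega * R)) : sigma_algebra Dom S ->
  (measurable (A : set (mt S)) <-> S (Dom `&` A)).
Proof.
move=> sS; have := sigma_algebra_id (Tr_sigma sS).
by rewrite /measurable /= => ->.
Qed.

Lemma mtDom S : sigma_algebra Dom S -> measurable (Dom : set (mt S)).
Proof.
move=> sS; apply/mtP => //; rewrite setIid.
by case: sS => S0 SD _; rewrite -(setD0 Dom); apply: SD.
Qed.

Definition rmeas (S : set (set (Omega * R))) (f : Omega * R -> R) :=
  forall B : set R, measurable B -> S (Dom `&` f @^-1` B).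

Lemma rmeasP S f : sigma_algebra Dom S ->
  rmeas S f <-> measurable_fun (Dom : set (mt S)) f.
Proof.
move=> sS; split.
  by move=> h _ B mB; apply/mtP => //; rewrite setIA setIid; exact: h.
move=> h B mB; have := h (mtDom sS) B mB; move/mtP => /(_ sS).
by rewrite setIA setIid.
Qed.

Lemma rmeasT S f : sigma_algebra Dom S ->
  rmeas S f <-> measurable_fun [set: mt S] f.
Proof.
move=> sS; split.
  by move=> h _ B mB; apply/mtP => //; rewrite setTI; exact: h.
move=> h B mB; have := h measurableT B mB; move/mtP => /(_ sS).
by rewrite setTI.
Qed.

Lemma rmeasS (S1 S2 : set (set (Omega * R))) f :
  S1 `<=` S2 -> rmeas S1 f -> rmeas S2 f.
Proof. by move=> S12 h B mB; apply: S12; exact: h. Qed.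

End trace.

Section comp.
Context {R : realType}.

Lemma open_comp_mx n (j : 'I_n) (V : set R) :
  open V -> open ((fun M : 'rV[R]_n => M ord0 j) @^-1` V).
Proof.
rewrite !openE => oV M /= VM.
have /nbhs_ballP [e e0 eV] := oV _ VM.
apply/nbhs_ballP; exists e => // N [_ h]; apply: eV; exact: h.
Qed.

Lemma comp_borel n (j : 'I_n) (C : set R) : measurable C ->
  borelV ((fun M : 'rV[R]_n => M ord0 j) @^-1` C).
Proof.
have sB : sigma_algebra setT (@borelV R n) by exact: smallest_sigma_algebra.
have sI := sigma_algebra_image (fun M : 'rV[R]_n => M ord0 j) sB.
suff H : measurable `<=` image_set_system setT (fun M : 'rV[R]_n => M ord0 j) (@borelV R n).
  by move=> /H; rewrite /image_set_system /= setTI.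
move=> C0 mC.
have : (@measurable_realfun.RGenOpens.G R).-sigma.-measurable C0.
  by rewrite -measurable_realfun.RGenOpens.measurableE.
move: C0 {mC}; apply: smallest_sub => // _ [a [b ->]].
rewrite /image_set_system /= setTI; apply: sub_sigma_algebra.
apply: open_comp_mx; exact: interval_open.
Qed.

Lemma meas_rV d' (T : measurableType d') n (h : T -> 'rV[R]_n) :
  (forall j, measurable_fun setT (fun x => h x ord0 j)) ->
  forall B, borelV B -> measurable (h @^-1` B).
Proof.
move=> mh.
have sI := sigma_algebra_image h (@sigma_algebra_measurable _ T).
suff H : @borelV R n `<=` image_set_system setT h measurable.
  by move=> B /H; rewrite /image_set_system /= setTI.
apply: smallest_sub => // U oU; rewrite /image_set_system /= setTI.
pose cr (c : 'rV[rat]_n) : 'rV[R]_n := map_mx ratr c.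
pose Bi (i : ('rV[rat]_n * rat)%type) : set 'rV[R]_n :=
  [set y | ball (cr i.1) (ratr i.2) `<=` U /\ ball (cr i.1) (ratr i.2) y].
have -> : U = \bigcup_i Bi i.
  apply/seteqP; split; last by move=> y [i _ [+ +]]; apply.
  move=> x Ux; move: oU; rewrite openE => /(_ x Ux) /nbhs_ballP [e e0 eU].
  have [r] := @rat_in_itvoo R 0 (e / 2) ltac:(by rewrite divr_gt0).
  rewrite in_itv /= => /andP[r0 re].
  have qj : forall j, exists q : rat, ratr q \in `](x ord0 j - ratr r), (x ord0 j + ratr r)[.
    move=> j; apply: rat_in_itvoo; by rewrite ltrBlDr -addrA ltrDl addr_gt0.
  have [c cP] := choice qj.
  have xb : ball (cr (\row_j c j)) (ratr r) x.
    split => // i j; rewrite (ord1 i) /cr !mxE.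
    move: (cP j); rewrite in_itv /= => /andP[h1 h2].
    rewrite -ball_normE /ball_ /= ltr_norml; apply/andP; split.
      lra.
    lra.
  exists (\row_j c j, r) => //; split => //= y yb; apply: eU.
  apply: (@le_ball _ _ _ (ratr r + ratr r)).
    by rewrite -mulr2n -mulr_natr -ler_pdivlMr // ltW.
  exact: ball_triangle (ball_sym xb) yb.
rewrite preimage_bigcup; apply: countable_bigcupT_measurable; first exact: countableP.
move=> [c r] /=.
have [sub|nsub] := pselect (ball (cr c) (ratr r) `<=` U); last first.
  rewrite (_ : _ @^-1` _ = set0) //; apply/seteqP; split => // y [] //.
have [r0|r0] := ltP 0 (ratr r : R); last first.
  rewrite (_ : _ @^-1` _ = set0) //; apply/seteqP; split => // y [_ [] /=].
  by rewrite ltNge r0.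
rewrite (_ : _ @^-1` _ = \bigcap_(j in setT)
    ((fun x => h x ord0 j) @^-1` ball (cr c ord0 j) (ratr r))).
  apply: fin_bigcap_measurable; first exact: finite_finset.
  move=> j _; rewrite -[X in measurable X]setTI; apply: mh => //.
  apply: measurable_realfun.open_measurable; exact: ball_open.
apply/seteqP; split.
  by move=> y [_ [_ h2]] j _; exact: h2.
move=> y h2; split => //; split => // i j; rewrite (ord1 i); exact: h2.
Qed.

End comp.

Section gn.
Context {R : realType}.

Definition gn (n : nat) (s : R) : R :=
  ((Num.floor (s * n.+1%:R) + 1)%:~R) / n.+1%:R.

Lemma gn_bounds n s : s < gn n s /\ gn n s <= s + n.+1%:R^-1.
Proof.
have n0 : (0 : R) < n.+1%:R by rewrite ltr0n.
have /andP[h1 h2] := Num.Theory.floor_itv (s * n.+1%:R).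
rewrite /gn; split.
  by rewrite ltr_pdivlMr.
rewrite ler_pdivrMr // mulrDl mulVf ?gt_eqF //.
by rewrite intrD lerD2r.
Qed.

Lemma gn_cvg s : (fun n => gn n s) @ \oo --> s.
Proof.
apply/cvgrPdist_le => e e0; near=> n.
have [h1 h2] := gn_bounds n s.
have : n.+1%:R^-1 <= e.
  by apply: ltW; near: n; exact: (near_infty_natSinv_lt (PosNum e0)).
rewrite ler_norml; move=> ?; apply/andP; split.
  by rewrite lerNl opprB lerBlDl (le_trans h2) // lerD2l.
by rewrite (le_trans _ (ltW e0)) // subr_le0 ltW.
Unshelve. all: by end_near. Qed.

Lemma gn_eq n s (k : nat) : k%:R / n.+1%:R <= s < k.+1%:R / n.+1%:R ->
  gn n s = k.+1%:R / n.+1%:R.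
Proof.
have n0 : (0 : R) < n.+1%:R by rewrite ltr0n.
move=> /andP[h1 h2]; rewrite /gn.
rewrite (@Num.Theory.floor_def _ _ k) //.
  by rewrite intrD pmulrn -natr1.
rewrite intrD pmulrn -ler_pdivrMr // -ltr_pdivlMr //.
by rewrite h1 /= natr1.
Qed.

Lemma gn_k n (s : R) : 0 <= s -> exists k : nat,
  k%:R / n.+1%:R <= s < k.+1%:R / n.+1%:R.
Proof.
have n0 : (0 : R) < n.+1%:R by rewrite ltr0n.
move=> s0; have /andP[h1 h2] := Num.Theory.floor_itv (s * n.+1%:R).
have : 0 <= Num.floor (s * n.+1%:R) by rewrite Num.Theory.floor_ge0 mulr_ge0.
case E : (Num.floor _) => [k|//] _; exists k.
rewrite E in h1 h2.
rewrite intrD pmulrn in h1 h2.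
rewrite ler_pdivrMr // ltr_pdivlMr // h1 /= -natr1; move: h2; rewrite -[(1%:~R : R)]/(1 : R) -[(n.+1%:~R : R)]/(n.+1%:R : R) -[(k%:~R : R)]/(k%:R : R).
by rewrite -?natr1.
Qed.

Lemma cvg_gn (V : topologicalType) (f : R -> V) (s : R) (l : V) :
  f x @[x --> s^'+] --> l -> f (gn n s) @[n --> \oo] --> l.
Proof.
move=> fl; apply: cvg_comp fl.
move=> A /= Ap.
have : \forall n \near \oo, (fun x => s < x -> A x) (gn n s).
  move: Ap; rewrite /at_right /within /= => Ap; exact: (gn_cvg Ap).
apply: filterS => n /=; apply.
by have [] := gn_bounds n s.
Qed.

End gn.

Section L1.
Context {R : realType} {dm : measure_display} {Omega : measurableType dm}.
Local Notation Dom := (@Dom R dm Omega).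
Local Notation PG := (@prodGB R dm Omega).

Lemma Tplus0 (s : R) : Tplus s <-> 0 <= s.
Proof. by rewrite /Tplus /= in_itv /= andbT. Qed.

Lemma sPG : sigma_algebra Dom PG.
Proof. exact: smallest_sigma_algebra. Qed.

Lemma L1 (Y : R -> Omega -> R) :
  (forall w t, 0 <= t -> Y x w @[x --> t^'+] --> Y t w) ->
  (forall t, 0 <= t -> forall B, measurable B -> measurable (Y t @^-1` B)) ->
  rmeas PG (fun p => Y p.2 p.1).
Proof.
move=> rc mY; apply/rmeasP; first exact: sPG.
apply: (@measurable_realfun.measurable_fun_cvg _ (mt PG) R Dom (fun n p => Y (gn n p.2) p.1)); last first.
  by move=> [w s] /= [_ /Tplus0 s0]; exact: cvg_gn (rc w s s0).
move=> n; apply/rmeasP; first exact: sPG.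
move=> B mB.
have n0 : (0 : R) < n.+1%:R by rewrite ltr0n.
have -> : Dom `&` (fun p => Y (gn n p.2) p.1) @^-1` B =
   \bigcup_k ((Y (k.+1%:R / n.+1%:R) @^-1` B) `*`
              `[k%:R / n.+1%:R, k.+1%:R / n.+1%:R[%classic).
  apply/seteqP; split.
    move=> [w s] /= [[_ /Tplus0 s0] YB].
    have [k hk] := gn_k n s0; exists k => //; split => /=.
      by rewrite -(gn_eq hk).
    by rewrite in_itv /=.
  move=> [w s] [k _ [/= YB]]; rewrite in_itv /= => hk.
  split; last by rewrite /= (gn_eq hk).
  split => //; apply/Tplus0; case/andP: hk => h _; apply: le_trans h.
  by rewrite divr_ge0.
apply: sigma_algebra_bigcup => k; apply: sub_sigma_algebra.
exists (Y (k.+1%:R / n.+1%:R) @^-1` B).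
  by apply: mY => //; rewrite divr_ge0.
exists `[k%:R / n.+1%:R, k.+1%:R / n.+1%:R[%classic => //.
split; first exact: measurable_itv.
move=> s /=; rewrite in_itv /= => /andP[h _]; apply/Tplus0; apply: le_trans h.
by rewrite divr_ge0.
Qed.

End L1.

Section cadlag_lemmas.
Context {R : realType}.

Lemma shift_right (V : topologicalType) (f : R -> V) (a u : R) (l : V) :
  f x @[x --> (a + u)^'+] --> l -> f (a + x) @[x --> u^'+] --> l.
Proof.
move=> fl; apply: cvg_comp fl => A /= /nbhs_ballP [e e0 hA].
apply/nbhs_ballP; exists e => // x bx ux; apply: hA.
  move: bx; rewrite -!ball_normE /ball_ /=.
  by rewrite opprD addrACA subrr add0r.
by rewrite ltrD2l.
Qed.

Lemma shift_left (V : topologicalType) (f : R -> V) (a u : R) (l : V) :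
  f x @[x --> (a + u)^'-] --> l -> f (a + x) @[x --> u^'-] --> l.
Proof.
move=> fl; apply: cvg_comp fl => A /= /nbhs_ballP [e e0 hA].
apply/nbhs_ballP; exists e => // x bx ux; apply: hA.
  move: bx; rewrite -!ball_normE /ball_ /=.
  by rewrite opprD addrACA subrr add0r.
by rewrite ltrD2l.
Qed.

Lemma cadlag_incr n (f : R -> 'rV[R]_n) (s : R) : 0 <= s -> cadlag f ->
  cadlag (fun u => f (s + u) - f s).
Proof.
move=> s0 [rc ll]; split.
  move=> t t0; apply: cvgB; last exact: cvg_cst.
  by apply: shift_right; apply: rc; rewrite addr_ge0.
move=> t t0; have [l fl] := ll (s + t) (ltr_wpDl s0 t0).
exists (l - f s); apply: cvgB; last exact: cvg_cst.
exact: shift_left.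
Qed.

Lemma comp_cont n (j : 'I_n) : continuous (fun M : 'rV[R]_n => M ord0 j).
Proof. by apply/continuousP => A oA; exact: open_comp_mx. Qed.

Lemma cadlag_comp n (j : 'I_n) (f : R -> 'rV[R]_n) :
  cadlag f -> cadlag (fun t => f t ord0 j).
Proof.
move=> [rc ll]; split.
  by move=> t t0; exact: (continuous_cvg _ (@comp_cont n j (f t)) (rc t t0)).
move=> t t0; have [l fl] := ll t t0; exists (l ord0 j).
exact: (continuous_cvg _ (@comp_cont n j l) fl).
Qed.

Lemma cadlag_id : cadlag (fun t : R => t).
Proof.
split; first by move=> t _; apply: cvg_at_right_filter; exact: cvg_id.
by move=> t _; exists t; apply: cvg_at_left_filter; exact: cvg_id.
Qed.

Lemma cadlag_step (t c : R) : cadlag (fun s : R => if t <= s then c else 0).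
Proof.
split.
  move=> s0 _; apply: cvg_near_cst.
  have [ts0|ts0] := leP t s0.
    near=> s; rewrite ifT //; apply: le_trans ts0 _.
    by near: s; exact: nbhs_right_ge.
  near=> s; rewrite ifF //; apply/negbTE; rewrite -ltNge.
  by near: s; exact: nbhs_right_lt.
move=> s0 _; have [ts0|ts0] := ltP t s0.
  exists c; apply: cvg_near_cst; near=> s; rewrite ifT //; apply: ltW.
  by near: s; exact: nbhs_left_gt.
exists 0; apply: cvg_near_cst; near=> s; rewrite ifF //; apply/negbTE.
rewrite -ltNge; apply: lt_le_trans ts0; near: s; exact: nbhs_left_lt.
Unshelve. all: by end_near. Qed.

End cadlag_lemmas.

Lemma shift_right2 {R : realType} (V : topologicalType) (f : R -> V) (a u : R) (l : V) :
  f x @[x --> (u + a)^'+] --> l -> f (x + a) @[x --> u^'+] --> l.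
Proof.
rewrite addrC => /shift_right.
by have -> : (fun x => f (x + a)) = (fun x => f (a + x)) by apply: funext => x; rewrite addrC.
Qed.

Section M12.
Context {R : realType} {dm : measure_display} {Omega : measurableType dm}.
Variables (F : R -> set (set Omega)) (n : nat) (X : R -> Omega -> 'rV[R]_n).
Hypothesis hF : filtration F.
Hypothesis Xad : forall t, 0 <= t -> forall B, borelV B -> F t (X t @^-1` B).
Hypothesis Xc : forall w, cadlag (fun t => X t w).

Local Notation Dom := (@Dom R dm Omega).
Local Notation PG := (@prodGB R dm Omega).

Lemma Fmeas t : 0 <= t -> F t `<=` measurable.
Proof. by case: hF => _ _ /[apply]. Qed.

Lemma opt_sub_PG : optional F `<=` PG.
Proof.
apply: smallest_sub; first exact: sPG.
move=> _ [Y [adY cY] [B mB <-]].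
apply: L1 => //.
  by move=> w t t0; exact: (cY w).1.
by move=> t t0 C mC; apply: (Fmeas t0); exact: adY.
Qed.

Lemma L1X (u : R) (j : 'I_n) : 0 <= u ->
  rmeas PG (fun p => X (p.2 + u) p.1 ord0 j).
Proof.
move=> u0; apply: (L1 (Y := fun t w => X (t + u) w ord0 j)).
  move=> w t t0; apply: (@shift_right2 R _ (fun x => X x w ord0 j)).
  by apply: (proj1 (cadlag_comp j (Xc w))); rewrite addr_ge0.
move=> t t0 B mB; apply: (@Fmeas (t + u)); first by rewrite addr_ge0.
by have := @Xad (t + u) (addr_ge0 t0 u0) _ (comp_borel j mB).
Qed.

Lemma incr_sub_PG : sigma_incr X `<=` PG.
Proof.
apply: smallest_sub; first exact: sPG.
move=> _ [A DA <-].
suff H : @Dsigma R n `<=` image_set_system Dom (incr X) PG by exact: H.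
apply: smallest_sub; first exact: (sigma_algebra_image (incr X) sPG).
move=> _ [s /Tplus0 s0 [B BB <-]]; rewrite /image_set_system /=.
pose h := fun p : Omega * R => X (p.2 + s) p.1 - X p.2 p.1.
have -> : Dom `&` incr X @^-1` ([set f | cadlag f] `&` (fun f => f s) @^-1` B)
    = Dom `&` h @^-1` B.
  apply/seteqP; split => [[w t] [Dp [_ hB]]|[w t] [Dp hB]]; first by split.
  split => //; split => //; apply: cadlag_incr (Xc w).
  by case: Dp => _ /Tplus0.
have : measurable (h @^-1` B : set (mt PG)).
  apply: meas_rV => // j.
  have -> : (fun p => h p ord0 j) =
      (fun p => X (p.2 + s) p.1 ord0 j - X (p.2 + 0) p.1 ord0 j).
    by apply: funext => p; rewrite /h !mxE addr0.
  apply: measurable_realfun.measurable_funB; apply/rmeasT; (try exact: sPG); exact: L1X.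
by move/mtP => /(_ sPG).
Qed.

End M12.

Section M3.
Context {R : realType} {dm : measure_display} {Omega : measurableType dm}.
Variables (F : R -> set (set Omega)) (n : nat) (X : R -> Omega -> 'rV[R]_n).
Hypothesis hF : filtration F.
Hypothesis Xad : forall t, 0 <= t -> forall B, borelV B -> F t (X t @^-1` B).
Hypothesis Xc : forall w, cadlag (fun t => X t w).

Local Notation Dom := (@Dom R dm Omega).
Local Notation J := (sjoin (optional F) (sigma_incr X)).

Lemma sJ : sigma_algebra Dom J.
Proof. exact: smallest_sigma_algebra. Qed.

Lemma opt_sub_J : optional F `<=` J.
Proof. by move=> A OA; apply: sub_sigma_algebra; left. Qed.

Lemma incr_sub_J : sigma_incr X `<=` J.
Proof. by move=> A OA; apply: sub_sigma_algebra; right. Qed.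

Lemma Fsig t : 0 <= t -> sigma_algebra setT (F t).
Proof. by case: hF => + _ _ => /[apply]. Qed.

Lemma Fcst t (P : Prop) : 0 <= t -> F t [set _ : Omega | P].
Proof.
move=> t0; have [F0 FC _] := Fsig t0.
have [p|np] := pselect P.
  rewrite (_ : [set _ | P] = setT `\` set0); first exact: FC.
  by rewrite setD0; apply/seteqP; split.
by rewrite (_ : [set _ | P] = set0) //; apply/seteqP; split.
Qed.

Lemma opt_gen (Y : R -> Omega -> R) :
  adapted F Y -> (forall w, cadlag (fun t => Y t w)) ->
  rmeas J (fun p => Y p.2 p.1).
Proof.
move=> aY cY B mB; apply: opt_sub_J; apply: sub_sigma_algebra.
by exists Y => //; exists B.
Qed.

Lemma J_time (C : set R) : measurable C -> J (Dom `&` [set p | C p.2]).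
Proof.
move=> mC; apply: (@opt_gen (fun t _ => t)) => //.
  by move=> t t0 B mB; exact: Fcst.
by move=> w; exact: cadlag_id.
Qed.

Lemma J_step (t : R) (j : 'I_n) : 0 <= t ->
  rmeas J (fun p => if t <= p.2 then X t p.1 ord0 j else 0).
Proof.
move=> t0; apply: (@opt_gen (fun s w => if t <= s then X t w ord0 j else 0)).
  move=> s s0 B mB; have [ts|ts] := boolP (t <= s).
    have := @Xad t t0 _ (comp_borel j mB).
    by case: hF => _ + _ => /(_ t s t0 ts) /[apply].
  rewrite (_ : _ @^-1` B = [set _ | B 0]); first exact: Fcst.
  by apply/seteqP; split.
by move=> w; exact: cadlag_step.
Qed.

Lemma J_Xs (j : 'I_n) : rmeas J (fun p => X p.2 p.1 ord0 j).
Proof.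
apply: (@opt_gen (fun s w => X s w ord0 j)).
  by move=> s s0 B mB; exact: (@Xad s s0 _ (comp_borel j mB)).
by move=> w; exact: cadlag_comp.
Qed.

Lemma J_incr (u : R) (j : 'I_n) : 0 <= u ->
  rmeas J (fun p => incr X p u ord0 j).
Proof.
move=> u0 B mB; apply: incr_sub_J.
rewrite (_ : _ `&` _ = Dom `&` incr X @^-1`
   ([set f | cadlag f] `&` (fun f => f u) @^-1`
       ((fun M : 'rV[R]_n => M ord0 j) @^-1` B))).
  apply: sub_sigma_algebra; exists ([set f | cadlag f] `&` (fun f => f u) @^-1`
       ((fun M : 'rV[R]_n => M ord0 j) @^-1` B)) => //.
  apply: sub_sigma_algebra; exists u; first exact/Tplus0.
  by exists ((fun M : 'rV[R]_n => M ord0 j) @^-1` B) => //; exact: comp_borel.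
apply/seteqP; split => [[w t] [Dp hB]|[w t] [Dp [_ hB]]]; last by split.
split => //; split => //; apply: cadlag_incr (Xc w).
by case: Dp => _ /Tplus0.
Qed.

Lemma J_W (u : R) (j : 'I_n) : 0 <= u ->
  rmeas J (fun p => X (p.2 + u) p.1 ord0 j).
Proof.
move=> u0; apply/rmeasT; first exact: sJ.
have -> : (fun p => X (p.2 + u) p.1 ord0 j) =
    (fun p => X p.2 p.1 ord0 j + incr X p u ord0 j).
  by apply: funext => p; rewrite /incr !mxE addrCA subrr addr0.
apply: measurable_realfun.measurable_funD; apply/rmeasT; (try exact: sJ).
  exact: J_Xs.
exact: J_incr.
Qed.

End M3.

Section M3b.
Context {R : realType} {dm : measure_display} {Omega : measurableType dm}.
Variables (F : R -> set (set Omega)) (n : nat) (X : R -> Omega -> 'rV[R]_n).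
Hypothesis hF : filtration F.
Hypothesis Xad : forall t, 0 <= t -> forall B, borelV B -> F t (X t @^-1` B).
Hypothesis Xc : forall w, cadlag (fun t => X t w).

Local Notation Dom := (@Dom R dm Omega).
Local Notation J := (sjoin (optional F) (sigma_incr X)).

Lemma J_timeM (C : set R) : measurable C ->
  measurable ([set p | C p.2] : set (mt J)).
Proof.
move=> mC; apply/mtP; first exact: sJ.
exact: J_time.
Qed.

Lemma J_Xt (t : R) (j : 'I_n) : 0 <= t -> rmeas J (fun p => X t p.1 ord0 j).
Proof.
move=> t0; apply/rmeasP; first exact: sJ.
have mD := mtDom (@sJ _ _ _ F _ X).
pose st p := if t <= p.2 then X t p.1 ord0 j else 0.
pose Bn k (p : Omega * R) := X (p.2 + gn k (t - p.2)) p.1 ord0 j.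
apply: (@measurable_realfun.measurable_fun_cvg _ (mt J) R Dom
   (fun k p => if t <= p.2 then st p else Bn k p)).
- move=> k; apply: measurable_fun_if => //.
  + apply: (measurable_fun_bool true) => //.
    apply: measurableI => //.
    rewrite (_ : _ @^-1` _ = [set p | `[t, +oo[%classic p.2]).
      by apply: J_timeM; exact: measurable_itv.
    by apply/seteqP; split => p /=; rewrite in_itv /= andbT.
  + apply: (measurable_funS mD); first exact: subIsetl.
    exact: (proj1 (rmeasP _ (@sJ _ _ _ F _ X)) (J_step hF Xad j t0)).
  + move=> mD' Y mY.
    have k0 : (0 : R) < k.+1%:R by rewrite ltr0n.
    pose Tm (m : nat) : set R := `]-oo, t[%classic `&`
       (fun s => t - s) @^-1` `[m%:R / k.+1%:R, m.+1%:R / k.+1%:R[%classic.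
    pose Wm (m : nat) (p : Omega * R) := X (p.2 + m.+1%:R / k.+1%:R) p.1 ord0 j.
    rewrite (_ : _ `&` _ = \bigcup_m (Dom `&` ([set p | Tm m p.2] `&` Wm m @^-1` Y))).
      apply: bigcupT_measurable => m; apply: measurableI => //.
      apply: measurableI.
        apply: J_timeM; apply: measurableI; first exact: measurable_itv.
        rewrite -[X in measurable X]setTI.
        apply: (measurable_realfun.measurable_funB (measurable_cst _)) => //.
      rewrite -[X in measurable X]setTI.
      have hu : (0:R) <= m.+1%:R / k.+1%:R by rewrite divr_ge0.
      exact: (proj1 (rmeasT _ (@sJ _ _ _ F _ X)) (J_W Xad Xc j hu) measurableT Y mY).
    apply/seteqP; split.
      move=> [w s] [[Dp /= ts] BY].
      have ts' : s < t by rewrite ltNge ts.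
      have ts2 : 0 <= t - s by rewrite subr_ge0 ltW.
      have [m hm] := gn_k k ts2.
      exists m => //; split => //; split.
        by split; rewrite /= in_itv /= ?ts' ?hm.
      by rewrite /Wm /= -(gn_eq hm).
    move=> [w s] [m _ [Dp [[/= + +] WY]]]; rewrite !in_itv /= => ts' hm.
    split; first by split => //; rewrite /= leNgt ts'.
    by rewrite /Bn /= (gn_eq hm).
- move=> [w s] /= [_ /Tplus0 s0].
  have [ts|ts] := leP t s.
    by rewrite /st ts; exact: cvg_cst.
  have rc := proj1 (cadlag_comp j (Xc w)) t t0.
  have := @shift_right R _ (fun x => X x w ord0 j) s (t - s) (X t w ord0 j).
  rewrite [s + (t - s)]addrC subrK => /(_ rc) /cvg_gn.
  by rewrite /Bn.
Qed.

Lemma J_Xt_vec (t : R) : 0 <= t -> forall B, borelV B ->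
  J (Dom `&` (fun p => X t p.1) @^-1` B).
Proof.
move=> t0 B BB; apply/mtP; first exact: sJ.
apply: meas_rV => // j; apply/rmeasT; first exact: sJ.
exact: J_Xt.
Qed.

Lemma sigmaX_J (A : set Omega) : sigmaX X A -> J (Dom `&` fst @^-1` A).
Proof.
have sI := sigma_algebra_image fst (@sJ _ _ _ F _ X).
suff H : sigmaX X `<=` image_set_system Dom fst J by exact: H.
apply: smallest_sub => //.
move=> _ [t /Tplus0 t0 [B BB <-]]; rewrite /image_set_system /=.
exact: J_Xt_vec.
Qed.

Lemma rect_J (A : set Omega) (C : set R) : sigmaX X A -> measurable C ->
  C `<=` Tplus -> J (A `*` C).
Proof.
move=> sA mC CT.
have : measurable ((fst @^-1` A) `&` [set p | C p.2] : set (mt J)).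
  apply: measurableI; last exact: J_timeM.
  by apply/mtP; [exact: sJ | exact: sigmaX_J].
move/mtP => /(_ (@sJ _ _ _ F _ X)).
rewrite (_ : _ `&` _ = A `*` C) //; apply/seteqP; split.
  by move=> [w s] [_ [/= ? ?]].
by move=> [w s] [/= Aw Cs]; split => //; split => //; exact: CT.
Qed.

End M3b.

Section evan.
Context {R : realType} {dm : measure_display} {Omega : measurableType dm}.
Variable P : probability Omega R.

Lemma evan_sub (A B : set (Omega * R)) : A `<=` B -> evanescent P B -> evanescent P A.
Proof.
move=> AB; apply: negligibleS => w [t Awt]; exists t; exact: AB.
Qed.

Lemma evan0 : evanescent P set0.
Proof.
rewrite /evanescent (_ : [set w | _] = set0); first exact: negligible_set0.
by apply/seteqP; split => w // [].
Qed.

Lemma evan_bigcup (A : (set (Omega * R))^nat) :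
  (forall k, evanescent P (A k)) -> evanescent P (\bigcup_k A k).
Proof.
move=> h; rewrite /evanescent.
apply: (@negligibleS _ _ _ P (\bigcup_k [set w | exists t, A k (w, t)])).
  by move=> w [t [k _ Akw]]; exists k => //; exists t.
exact: negligible_bigcup.
Qed.

End evan.

Unset Implicit Arguments.

Theorem lemma3p19 (R : realType) (dm : measure_display) (Omega : measurableType dm)
  (P : probability Omega R) (F : R -> set (set Omega)) (d : nat)
  (X : R -> Omega -> 'rV[R]_d) :
  filtration F -> levy_process P F X ->
  ((measurable = sigmaX X) ->
     prodGB = sjoin (optional F) (sigma_incr X)) /\
  ((forall A, measurable A ->
      exists B, sigmaX X B /\ P.-negligible (symdiff A B)) ->
     (forall A, prodGB A -> exists B, sjoin (optional F) (sigma_incr X) B /\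
                 evanescent P (symdiff A B)) /\
     (forall B, sjoin (optional F) (sigma_incr X) B -> exists A, prodGB A /\
                 evanescent P (symdiff A B))).
Proof.
move=> hF [Xad Xc _ _ _].
have JPG : sjoin (optional F) (sigma_incr X) `<=` prodGB.
  apply: smallest_sub; first exact: sPG.
  move=> A [OA|IA]; first exact: opt_sub_PG hF _ OA.
  exact: incr_sub_PG hF Xad Xc _ IA.
have rJ := rect_J hF Xad Xc.
split.
  move=> hm; apply/seteqP; split; last exact: JPG.
  apply: smallest_sub; first exact: sJ.
  move=> _ [A mA [C [mC CT] <-]]; apply: rJ => //.
  by rewrite -hm.
move=> happrox; split; last first.
  move=> B JB; exists B; split; first exact: JPG.
  apply: (evan_sub _ (evan0 P)) => p [[] //|[] //].
pose K := [set A | exists B, sjoin (optional F) (sigma_incr X) B /\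
                           evanescent P (symdiff A B)].
suff H : prodGB `<=` K by move=> A /H.
apply: smallest_sub.
  split.
  - exists set0; split; first exact: sigma_algebra0.
    apply: (evan_sub _ (evan0 P)) => p [[] //|[] //].
  - move=> A [B [JB eAB]]; exists (Dom `\` B); split; first exact: sigma_algebraCD.
    apply: evan_sub eAB => p [[[Dp nA] nDB]|[[Dp nB] nDA]].
      by right; split => //; apply: contrapT => nBp; exact: nDB.
    by left; split => //; apply: contrapT => nAp; exact: nDA.
  - move=> A hA; have /choice [G hG] := hA.
    exists (\bigcup_k G k); split.
      by apply: sigma_algebra_bigcup => k; exact: (hG k).1.
    apply: (@evan_sub _ _ _ P _ (\bigcup_k symdiff (A k) (G k))).
      move=> p [[[k _ Akp] nG]|[[k _ Gkp] nA]].
        by exists k => //; left; split => // Gp; apply: nG; exists k.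
      by exists k => //; right; split => // Ap; apply: nA; exists k.
    by apply: evan_bigcup => k; exact: (hG k).2.
move=> _ [A mA [C [mC CT] <-]].
have [B0 [sB0 nB0]] := happrox A mA.
exists (B0 `*` C); split; first exact: rJ.
apply: negligibleS nB0 => w [t [[[Aw Ct] nB]|[[Bw Ct] nA]]].
  by left; split => // Bw; apply: nB.
by right; split => // Aw; apply: nA.
Qed.
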